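(* For the generalized $q$-Toda hierarchy on $\mathcal L=\Lambda_\epsilon+u+e^v\Lambda_\epsilon^{-1}$ with flows $\epsilon\partial_{t_j}\mathcal L=[(B_j)_+,\mathcal L]$, the Hamiltonian densities $h_m=\frac1{m!}\operatorname{Res}\mathcal L^m$ satisfy $$\frac{\partial h_m}{\partial t_n}=\frac{\partial h_n}{\partial t_m},\qquad m,n\ge1.$$
   Context: Fix $\epsilon>0$; $\Lambda_\epsilon^j g(x)=g\!\left(\frac{x}{1-j\epsilon x}\right)$, $j\in\mathbb{Z}$. Difference operators $A=\sum_k A_k(x)\Lambda_\epsilon^k$ multiply by $(X\Lambda_\epsilon^i)\circ(Y\Lambda_\epsilon^j)=X(x)Y\!\left(\frac{x}{1-i\epsilon x}\right)\Lambda_\epsilon^{i+j}$; $A_+=\sum_{k\ge0}A_k\Lambda_\epsilon^k$, $A_-=\sum_{k<0}A_k\Lambda_\epsilon^k$, $\operatorname{Res}A=A_0$. $B_j=\mathcal L^j/j!$; $u,v$ depend on $x$ and the times $t_j$. *)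

(* Defs.v *)
From Stdlib Require Import Reals ZArith List.
Import ListNotations.
Open Scope R_scope.

(* A difference operator is a finite formal sum  sum_i X_i(x) Lambda_eps^{k_i},
   represented as a list of monomials (k_i, X_i). *)
Definition dop := list (Z * (R -> R)).

(* Lambda_eps^j acts by x |-> x / (1 - j eps x). *)
Definition shift (eps : R) (j : Z) (x : R) : R := x / (1 - IZR j * eps * x).

Definition coef (A : dop) (k : Z) (x : R) : R :=
  fold_right (fun m acc => if Z.eqb (fst m) k then snd m x + acc else acc) 0 A.

Definition dadd (A B : dop) : dop := A ++ B.
Definition dscale (c : R) (A : dop) : dop :=
  map (fun m => (fst m, fun x => c * snd m x)) A.

(* (X Lambda^i) o (Y Lambda^j) = X(x) Y(x/(1-i eps x)) Lambda^{i+j}, extended bilinearly *)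
Definition dmul (eps : R) (A B : dop) : dop :=
  flat_map (fun a => map (fun b =>
     ((fst a + fst b)%Z, fun x => snd a x * snd b (shift eps (fst a) x))) B) A.

Definition dcomm (eps : R) (A B : dop) : dop :=
  dadd (dmul eps A B) (dscale (-1) (dmul eps B A)).

Definition dplus (A : dop) : dop := filter (fun m => Z.leb 0 (fst m)) A.

Definition done : dop := [(0%Z, fun _ => 1)].

Fixpoint dpow (eps : R) (A : dop) (n : nat) : dop :=
  match n with
  | O => done
  | S n' => dmul eps (dpow eps A n') A
  end.

(* Times: t : nat -> R, with t j the time t_j (j >= 1). *)
Definition upd (t : nat -> R) (j : nat) (s : R) : nat -> R :=
  fun i => if Nat.eqb i j then s else t i.

Definition Lax (u v : R -> (nat -> R) -> R) (t : nat -> R) : dop :=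
  [(1%Z, fun _ => 1); (0%Z, fun x => u x t); ((-1)%Z, fun x => exp (v x t))].

Definition Bop (eps : R) (u v : R -> (nat -> R) -> R) (j : nat) (t : nat -> R) : dop :=
  dscale (/ INR (fact j)) (dpow eps (Lax u v t) j).

Definition hdens (eps : R) (u v : R -> (nat -> R) -> R) (m : nat) (x : R) (t : nat -> R) : R :=
  / INR (fact m) * coef (dpow eps (Lax u v t) m) 0 x.

(* Main.v *)
Require Import Defs.
From Stdlib Require Import Reals ZArith List Lra Lia FunctionalExtensionality IndefiniteDescription Classical.
Import ListNotations.
Open Scope R_scope.


Definition delta (i : Z) : Z -> R := fun m => if Z.eqb m i then 1 else 0.

Definition act (X : Z -> R) (A : dop) (g : Z -> R) (n : Z) : R :=
  fold_right (fun m acc => snd m (X n) * g (n + fst m)%Z + acc) 0 A.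

Definition good (eps : R) (X : Z -> R) (n : Z) : Prop :=
  forall k, Defs.shift eps k (X n) = X (n + k)%Z.

Lemma coef_act X A k n : coef A k (X n) = act X A (delta (n + k)) n.
Proof.
  induction A as [|[k' f] A IH]; simpl; [reflexivity|].
  rewrite IH. unfold delta. destruct (Z.eqb k' k) eqn:E.
  - apply Z.eqb_eq in E; subst. rewrite Z.eqb_refl. ring.
  - replace (Z.eqb (n + k') (n + k)) with false; [ring|].
    symmetry; apply Z.eqb_neq; apply Z.eqb_neq in E; lia.
Qed.

Lemma act_app X A B g n : act X (A ++ B) g n = act X A g n + act X B g n.
Proof. induction A; simpl; [ring|]. rewrite IHA; ring. Qed.

Lemma act_scale X c A g n : act X (dscale c A) g n = c * act X A g n.
Proof. induction A; simpl; [ring|]. rewrite IHA; ring. Qed.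

Lemma act_lin X A c1 c2 g h n :
  act X A (fun m => c1 * g m + c2 * h m) n = c1 * act X A g n + c2 * act X A h n.
Proof. induction A; simpl; [ring|]. rewrite IHA; ring. Qed.

Lemma act_zero X A n : act X A (fun _ => 0) n = 0.
Proof. induction A; simpl; [ring|]. rewrite IHA; ring. Qed.

Lemma act_pt X Y A g n : X n = Y n -> act X A g n = act Y A g n.
Proof. intros H; induction A; simpl; [ring|]. rewrite IHA, H; ring. Qed.

Lemma act_map_mul eps X a B g n :
  good eps X n ->
  act X (map (fun b => ((fst a + fst b)%Z, fun x => snd a x * snd b (Defs.shift eps (fst a) x))) B) g n
  = snd a (X n) * act X B g (n + fst a)%Z.
Proof.
  intros H; induction B; simpl; [ring|]. rewrite IHB, H, Z.add_assoc; ring.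
Qed.

Lemma act_mul eps X A B g n :
  good eps X n -> act X (dmul eps A B) g n = act X A (act X B g) n.
Proof.
  intros H; induction A; simpl; [reflexivity|].
  unfold dmul in *; simpl. rewrite act_app, IHA, act_map_mul by exact H. ring.
Qed.

Definition trunc (n : Z) (g : Z -> R) : Z -> R := fun m => if Z.leb n m then g m else 0.
Definition trunc' (n : Z) (g : Z -> R) : Z -> R := fun m => if Z.ltb m n then g m else 0.

Lemma leb_shift (n k : Z) : Z.leb n (n + k)%Z = Z.leb 0 k.
Proof. destruct (Z.leb_spec n (n+k)), (Z.leb_spec 0 k); auto; lia. Qed.

Lemma trunc_shift n g k : trunc n g (n + k)%Z = if Z.leb 0 k then g (n + k)%Z else 0.
Proof. unfold trunc; rewrite leb_shift; reflexivity. Qed.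

Lemma act_plus X A g n : act X (dplus A) g n = act X A (trunc n g) n.
Proof.
  induction A; simpl; [reflexivity|].
  destruct (Z.leb 0 (fst a)) eqn:E; simpl; rewrite IHA, trunc_shift, E; ring.
Qed.

Lemma act_Lax X u v t g n :
  act X (Lax u v t) g n = g (n + 1)%Z + u (X n) t * g n + exp (v (X n) t) * g (n - 1)%Z.
Proof.
  unfold Lax, act; simpl. rewrite Z.add_0_r. replace (n + -1)%Z with (n - 1)%Z by lia. ring.
Qed.

Lemma act_done X g n : act X done g n = g n.
Proof. unfold done, act; simpl. rewrite Z.add_0_r; ring. Qed.

Fixpoint iterL (X : Z -> R) u v t (i : nat) (g : Z -> R) : Z -> R :=
  match i with
  | O => g
  | S i => fun n => act X (Lax u v t) (iterL X u v t i g) n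
  end.

Lemma iterL_comm X u v t i g :
  iterL X u v t i (act X (Lax u v t) g) = act X (Lax u v t) (iterL X u v t i g).
Proof. induction i; [reflexivity|]. cbn [iterL]. rewrite IHi. reflexivity. Qed.

Lemma iterL_lin X u v t i c1 c2 g h :
  iterL X u v t i (fun m => c1 * g m + c2 * h m) = fun n => c1 * iterL X u v t i g n + c2 * iterL X u v t i h n.
Proof.
  induction i; [reflexivity|]. cbn [iterL]. rewrite IHi. apply functional_extensionality; intro n.
  apply act_lin.
Qed.

Lemma iterL_zero X u v t i : iterL X u v t i (fun _ => 0) = fun _ => 0.
Proof.
  induction i; [reflexivity|]. cbn [iterL]. rewrite IHi. apply functional_extensionality; intro n.
  apply act_zero.
Qed.

Lemma iterL_scal X u v t i c g n : iterL X u v t i (fun m => c * g m) n = c * iterL X u v t i g n.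
Proof.
  replace (fun m => c * g m) with (fun m => c * g m + 0 * (fun _ => 0) m)
    by (apply functional_extensionality; intro; ring).
  rewrite iterL_lin; ring.
Qed.

Lemma iterL_add X u v t i g h n : iterL X u v t i (fun m => g m + h m) n = iterL X u v t i g n + iterL X u v t i h n.
Proof.
  replace (fun m => g m + h m) with (fun m => 1 * g m + 1 * h m)
    by (apply functional_extensionality; intro; ring).
  rewrite iterL_lin; ring.
Qed.

Lemma iterL_plus X u v t i j g : iterL X u v t (i + j) g = iterL X u v t i (iterL X u v t j g).
Proof. induction i; [reflexivity|]. cbn [iterL Nat.add]. rewrite IHi; reflexivity. Qed.

Lemma iterL_swap X u v t i j g : iterL X u v t i (iterL X u v t j g) = iterL X u v t j (iterL X u v t i g).
Proof. rewrite <- !iterL_plus, Nat.add_comm; reflexivity. Qed.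

Lemma act_dpow eps X u v t i g n :
  good eps X n -> act X (dpow eps (Lax u v t) i) g n = iterL X u v t i g n.
Proof.
  intros H; revert g; induction i; intro g; cbn [dpow iterL].
  - apply act_done.
  - rewrite act_mul by exact H. rewrite IHi. rewrite iterL_comm. reflexivity.
Qed.

Definition zsum (F : Z -> R) (ks : list Z) : R := fold_right (fun k acc => F k + acc) 0 ks.

Lemma zsum_plus F G ks : zsum (fun k => F k + G k) ks = zsum F ks + zsum G ks.
Proof. induction ks; simpl; [ring|]. rewrite IHks; ring. Qed.

Lemma zsum_scal c F ks : zsum (fun k => c * F k) ks = c * zsum F ks.
Proof. induction ks; simpl; [ring|]. rewrite IHks; ring. Qed.

Lemma zsum_ext F G ks : (forall k, In k ks -> F k = G k) -> zsum F ks = zsum G ks.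
Proof.
  induction ks; simpl; intros H; [reflexivity|]. rewrite H by auto. rewrite IHks by auto. reflexivity.
Qed.

Lemma zsum_zero ks : zsum (fun _ => 0) ks = 0.
Proof. induction ks; simpl; [ring|]. rewrite IHks; ring. Qed.

Lemma zsum_delta_notin k0 c (g : Z -> R) ks :
  ~ In k0 ks -> zsum (fun k => (if Z.eqb k0 k then c else 0) * g k) ks = 0.
Proof.
  induction ks; simpl; intros H; [reflexivity|].
  destruct (Z.eqb k0 a) eqn:E.
  - apply Z.eqb_eq in E; subst; tauto.
  - rewrite IHks by tauto. ring.
Qed.

Lemma zsum_delta k0 c (g : Z -> R) ks :
  NoDup ks -> In k0 ks -> zsum (fun k => (if Z.eqb k0 k then c else 0) * g k) ks = c * g k0.
Proof.
  induction ks; simpl; intros Hn Hi; [contradiction|]. inversion Hn; subst.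
  destruct (Z.eqb k0 a) eqn:E.
  - apply Z.eqb_eq in E; subst. rewrite zsum_delta_notin by assumption. ring.
  - destruct Hi as [Hi|Hi]; [subst; rewrite Z.eqb_refl in E; discriminate|].
    rewrite IHks by assumption. ring.
Qed.

Lemma act_coef_sum X A g n ks :
  NoDup ks -> (forall m, In m A -> In (fst m) ks) ->
  act X A g n = zsum (fun k => coef A k (X n) * g (n + k)%Z) ks.
Proof.
  intros Hn; induction A as [|[k0 f] A IH]; intros Hin; simpl.
  - symmetry. rewrite (zsum_ext _ (fun _ => 0)); [apply zsum_zero|]. intros k _; simpl. ring.
  - rewrite IH by (intros; apply Hin; simpl; auto).
    erewrite (zsum_ext (fun k => (if Z.eqb k0 k then f (X n) + coef A k (X n) else coef A k (X n)) * g (n + k)%Z)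
       (fun k => (if Z.eqb k0 k then f (X n) else 0) * g (n + k)%Z + coef A k (X n) * g (n + k)%Z)).
    + rewrite zsum_plus. rewrite (zsum_delta k0 (f (X n)) (fun k => g (n + k)%Z)); auto.
      apply (Hin (k0, f)); simpl; auto.
    + intros k _. destruct (Z.eqb k0 k); ring.
Qed.

Definition deg_ok (K : nat) (A : dop) : Prop :=
  forall m, In m A -> (- Z.of_nat K <= fst m <= Z.of_nat K)%Z.

Lemma deg_mono K K' A : (K <= K')%nat -> deg_ok K A -> deg_ok K' A.
Proof. intros HK H m Hm. specialize (H m Hm). lia. Qed.

Lemma deg_mul eps K1 K2 A B : deg_ok K1 A -> deg_ok K2 B -> deg_ok (K1 + K2) (dmul eps A B).
Proof.
  intros HA HB m Hm. unfold dmul in Hm. apply in_flat_map in Hm as [a [Ha Hm]].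
  apply in_map_iff in Hm as [b [Hb Hb2]]. subst m. simpl.
  specialize (HA a Ha). specialize (HB b Hb2). lia.
Qed.

Lemma deg_app K A B : deg_ok K A -> deg_ok K B -> deg_ok K (dadd A B).
Proof. intros HA HB m Hm. apply in_app_or in Hm as [H|H]; auto. Qed.

Lemma deg_scale K c A : deg_ok K A -> deg_ok K (dscale c A).
Proof. intros HA m Hm. unfold dscale in Hm. apply in_map_iff in Hm as [a [Ha Hm]]. subst; simpl; auto. Qed.

Lemma deg_plus K A : deg_ok K A -> deg_ok K (dplus A).
Proof. intros HA m Hm. unfold dplus in Hm. apply filter_In in Hm as [Hm _]. auto. Qed.

Lemma deg_Lax u v t : deg_ok 1 (Lax u v t).
Proof. intros m Hm. simpl in Hm. destruct Hm as [<-|[<-|[<-|[]]]]; simpl; lia. Qed.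

Lemma deg_dpow eps u v t i : deg_ok i (dpow eps (Lax u v t) i).
Proof.
  induction i; simpl.
  - intros m Hm. simpl in Hm. destruct Hm as [<-|[]]; simpl; lia.
  - replace (S i) with (i + 1)%nat by lia. apply deg_mul; auto. apply deg_Lax.
Qed.

Lemma deg_C eps u v j t :
  deg_ok (S j) (dcomm eps (dplus (Bop eps u v j t)) (Lax u v t)).
Proof.
  unfold dcomm, Bop. apply deg_app.
  - replace (S j) with (j + 1)%nat by lia. apply deg_mul; [|apply deg_Lax].
    apply deg_plus, deg_scale, deg_dpow.
  - apply deg_scale. replace (S j) with (1 + j)%nat by lia. apply deg_mul; [apply deg_Lax|].
    apply deg_plus, deg_scale, deg_dpow.
Qed.

Definition zrange (K : nat) : list Z := map (fun i => (Z.of_nat i - Z.of_nat K)%Z) (seq 0 (2 * K + 1)).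

Lemma zrange_In K k : (- Z.of_nat K <= k <= Z.of_nat K)%Z -> In k (zrange K).
Proof.
  intros H. unfold zrange. apply in_map_iff. exists (Z.to_nat (k + Z.of_nat K)). split.
  - rewrite Z2Nat.id by lia. lia.
  - apply in_seq. lia.
Qed.

Lemma zrange_NoDup K : NoDup (zrange K).
Proof.
  unfold zrange. apply NoDup_map_NoDup_ForallPairs; [|apply seq_NoDup].
  intros x y _ _ H. lia.
Qed.

Lemma dpl_plus f g x a b : derivable_pt_lim f x a -> derivable_pt_lim g x b ->
  derivable_pt_lim (fun s => f s + g s) x (a + b).
Proof. apply derivable_pt_lim_plus. Qed.
Lemma dpl_mult f g x a b : derivable_pt_lim f x a -> derivable_pt_lim g x b ->
  derivable_pt_lim (fun s => f s * g s) x (a * g x + f x * b).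
Proof. apply derivable_pt_lim_mult. Qed.
Lemma dpl_const c x : derivable_pt_lim (fun _ => c) x 0.
Proof. apply derivable_pt_lim_const. Qed.
Lemma dpl_scal c f x a : derivable_pt_lim f x a -> derivable_pt_lim (fun s => c * f s) x (c * a).
Proof. apply derivable_pt_lim_scal. Qed.
Lemma dpl_ext f g x a : (forall s, f s = g s) -> derivable_pt_lim g x a -> derivable_pt_lim f x a.
Proof. intros H. replace f with g; auto. apply functional_extensionality; auto. Qed.

Lemma deriv_zsum (F : R -> Z -> R) dF x ks :
  (forall k, In k ks -> derivable_pt_lim (fun s => F s k) x (dF k)) ->
  derivable_pt_lim (fun s => zsum (F s) ks) x (zsum dF ks).
Proof.
  induction ks; simpl; intros H.
  - apply dpl_const.
  - apply dpl_plus; auto.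
Qed.

Lemma upd_same t j : upd t j (t j) = t.
Proof.
  apply functional_extensionality; intro i. unfold upd. destruct (Nat.eqb_spec i j); subst; auto.
Qed.

Lemma Lax_ks u v s j : forall m, In m (Lax u v s) -> In (fst m) (zrange (S j)).
Proof.
  intros m Hm. apply zrange_In. pose proof (deg_Lax u v s m Hm). lia.
Qed.

Lemma C_ks eps u v j t : forall m, In m (dcomm eps (dplus (Bop eps u v j t)) (Lax u v t)) -> In (fst m) (zrange (S j)).
Proof.
  intros m Hm. apply zrange_In. apply (deg_C eps u v j t m Hm).
Qed.

Section Deriv.
Variables (eps : R) (u v : R -> (nat -> R) -> R) (X : Z -> R) (j : nat) (t : nat -> R) (dk : Z -> R -> R).
Hypothesis Hdk : forall k x, derivable_pt_lim (fun s => coef (Lax u v (upd t j s)) k x) (t j) (dk k x).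
Hypothesis Hdk2 : forall k x, eps * dk k x = coef (dcomm eps (dplus (Bop eps u v j t)) (Lax u v t)) k x.
Local Notation ks := (zrange (S j)).
Definition Ld (g : Z -> R) (n : Z) : R := zsum (fun k => dk k (X n) * g (n + k)%Z) ks.

Lemma step_deriv (F : R -> Z -> R) (DF : Z -> R) n :
  (forall n, derivable_pt_lim (fun s => F s n) (t j) (DF n)) ->
  derivable_pt_lim (fun s => act X (Lax u v (upd t j s)) (F s) n) (t j)
    (Ld (F (t j)) n + act X (Lax u v t) DF n).
Proof.
  intros HF.
  apply dpl_ext with (g := fun s => zsum (fun k => coef (Lax u v (upd t j s)) k (X n) * F s (n + k)%Z) ks).
  { intro s. apply act_coef_sum; [apply zrange_NoDup | apply Lax_ks]. }
  replace (Ld (F (t j)) n + act X (Lax u v t) DF n) with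
    (zsum (fun k => dk k (X n) * F (t j) (n + k)%Z + coef (Lax u v (upd t j (t j))) k (X n) * DF (n + k)%Z) ks).
  - apply deriv_zsum. intros k _.
    apply (dpl_mult (fun s => coef (Lax u v (upd t j s)) k (X n)) (fun s => F s (n + k)%Z)); [apply Hdk | apply HF].
  - rewrite zsum_plus. unfold Ld. f_equal. rewrite upd_same. symmetry.
    apply act_coef_sum; [apply zrange_NoDup | apply Lax_ks].
Qed.

Lemma Ld_eps g n : eps * Ld g n = act X (dcomm eps (dplus (Bop eps u v j t)) (Lax u v t)) g n.
Proof.
  unfold Ld. rewrite <- zsum_scal. rewrite (act_coef_sum _ _ _ _ ks); [|apply zrange_NoDup|apply C_ks].
  apply zsum_ext. intros k _. rewrite <- Hdk2. ring.
Qed.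

Variable g0 : Z -> R.
Fixpoint DI (i : nat) : Z -> R :=
  match i with
  | O => fun _ => 0
  | S i => fun n => Ld (iterL X u v t i g0) n + act X (Lax u v t) (DI i) n
  end.

Lemma DI_deriv i n : derivable_pt_lim (fun s => iterL X u v (upd t j s) i g0 n) (t j) (DI i n).
Proof.
  revert n; induction i; intro n.
  - cbn [iterL DI]. apply dpl_const.
  - cbn [iterL DI].
    pose proof (step_deriv (fun s => iterL X u v (upd t j s) i g0) (DI i) n IHi) as H.
    cbv beta in H. rewrite upd_same in H. exact H.
Qed.

Definition Pop (g : Z -> R) (n : Z) : R := act X (dplus (Bop eps u v j t)) g n.

Lemma act_scal_g A c g n : act X A (fun m => c * g m) n = c * act X A g n.
Proof.
  replace (fun m => c * g m) with (fun m => c * g m + 0 * (fun _ => 0) m)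
    by (apply functional_extensionality; intro; ring).
  rewrite act_lin; ring.
Qed.

Lemma act_sub_g A g h n : act X A (fun m => g m - h m) n = act X A g n - act X A h n.
Proof.
  replace (fun m => g m - h m) with (fun m => 1 * g m + (-1) * h m)
    by (apply functional_extensionality; intro; ring).
  rewrite act_lin; ring.
Qed.

Lemma DI_eps (Hg : forall n, good eps X n) i n :
  eps * DI i n = Pop (iterL X u v t i g0) n - iterL X u v t i (Pop g0) n.
Proof.
  revert n; induction i; intro n.
  - cbn [DI iterL]. ring.
  - cbn [DI iterL]. rewrite Rmult_plus_distr_l, Ld_eps.
    rewrite <- act_scal_g.
    replace (fun m => eps * DI i m) with (fun m => Pop (iterL X u v t i g0) m - iterL X u v t i (Pop g0) m)
      by (apply functional_extensionality; intro m; rewrite IHi; reflexivity).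
    rewrite act_sub_g.
    unfold dcomm, dadd. rewrite act_app, act_scale, !act_mul by apply Hg.
    unfold Pop.
    set (P := dplus (Bop eps u v j t)). set (L := Lax u v t). set (F := iterL X u v t i g0).
    change (act X P (act X L F) n) with (act X P (fun n0 => act X L F n0) n).
    change (act X L (act X P F) n) with (act X L (fun n0 => act X P F n0) n).
    ring.
Qed.

Lemma Pop_formula n g : good eps X n ->
  Pop g n = / INR (fact j) * iterL X u v t j (trunc n g) n.
Proof.
  intros H. unfold Pop, Bop. rewrite act_plus, act_scale, act_dpow by exact H. reflexivity.
Qed.
End Deriv.

Section Sym.
Variables (X : Z -> R) (u v : R -> (nat -> R) -> R) (t : nat -> R).
Local Notation IL := (iterL X u v t).
Definition PP (j : nat) (g : Z -> R) (k : Z) : R := IL j (trunc k g) k.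
Definition NN (j : nat) (g : Z -> R) (k : Z) : R := IL j (trunc' k g) k.

Lemma IL_split j g k : IL j g k = PP j g k + NN j g k.
Proof.
  unfold PP, NN. rewrite <- iterL_add. f_equal. apply functional_extensionality; intro m.
  unfold trunc, trunc'. destruct (Z.leb_spec k m), (Z.ltb_spec m k); try lia; ring.
Qed.

Lemma PP_add j g h k : PP j (fun m => g m + h m) k = PP j g k + PP j h k.
Proof.
  unfold PP. rewrite <- iterL_add. f_equal. apply functional_extensionality; intro m.
  unfold trunc. destruct (Z.leb k m); ring.
Qed.

Lemma NN_add j g h k : NN j (fun m => g m + h m) k = NN j g k + NN j h k.
Proof.
  unfold NN. rewrite <- iterL_add. f_equal. apply functional_extensionality; intro m.
  unfold trunc'. destruct (Z.ltb m k); ring.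
Qed.

Lemma IL_add j g h k : IL j (fun m => g m + h m) k = IL j g k + IL j h k.
Proof. apply iterL_add. Qed.

Lemma PP_PP a b : PP a (PP b (delta 0)) 0 = IL b (delta 0) 0 * IL a (delta 0) 0.
Proof.
  unfold PP at 1.
  replace (trunc 0 (PP b (delta 0))) with (fun m => IL b (delta 0) 0 * delta 0 m).
  - apply iterL_scal.
  - apply functional_extensionality; intro m. unfold trunc, PP, delta.
    destruct (Z.eqb_spec m 0).
    + subst. simpl. rewrite Rmult_1_r. f_equal. apply functional_extensionality; intro q.
      unfold trunc. destruct (Z.leb_spec 0 q), (Z.eqb_spec q 0); try lia; ring.
    + destruct (Z.leb_spec 0 m); [|ring].
      replace (trunc m (fun m0 : Z => if (m0 =? 0)%Z then 1 else 0)) with (fun _ : Z => 0).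
      * rewrite iterL_zero. ring.
      * apply functional_extensionality; intro q. unfold trunc, delta.
        destruct (Z.leb_spec m q), (Z.eqb_spec q 0); try lia; ring.
Qed.

Lemma NN_NN a b : NN a (NN b (delta 0)) 0 = 0.
Proof.
  unfold NN at 1.
  replace (trunc' 0 (NN b (delta 0))) with (fun _ : Z => 0).
  - rewrite iterL_zero. reflexivity.
  - apply functional_extensionality; intro m. unfold trunc', NN.
    destruct (Z.ltb_spec m 0); [|reflexivity].
    replace (trunc' m (delta 0)) with (fun _ : Z => 0).
    + rewrite iterL_zero. reflexivity.
    + apply functional_extensionality; intro q. unfold trunc', delta.
      destruct (Z.ltb_spec q m), (Z.eqb_spec q 0); try lia; ring.
Qed.

Lemma PP_ext j g h k : (forall m, g m = h m) -> PP j g k = PP j h k.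
Proof. intros H. f_equal. apply functional_extensionality; auto. Qed.
Lemma NN_ext j g h k : (forall m, g m = h m) -> NN j g k = NN j h k.
Proof. intros H. f_equal. apply functional_extensionality; auto. Qed.
Lemma IL_ext j g h k : (forall m, g m = h m) -> IL j g k = IL j h k.
Proof. intros H. f_equal. apply functional_extensionality; auto. Qed.

Lemma SYM m n :
  PP n (IL m (delta 0)) 0 - IL m (PP n (delta 0)) 0 =
  PP m (IL n (delta 0)) 0 - IL n (PP m (delta 0)) 0.
Proof.
  set (d := delta 0).
  assert (Em : forall k, IL m d k = PP m d k + NN m d k) by (intro; apply IL_split).
  assert (En : forall k, IL n d k = PP n d k + NN n d k) by (intro; apply IL_split).
  assert (E1 : PP n (IL m d) 0 = PP n (PP m d) 0 + PP n (NN m d) 0).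
  { rewrite <- PP_add. apply PP_ext. auto. }
  assert (E2 : IL m (PP n d) 0 = PP m (PP n d) 0 + NN m (PP n d) 0) by apply IL_split.
  assert (E3 : PP m (IL n d) 0 = PP m (PP n d) 0 + PP m (NN n d) 0).
  { rewrite <- PP_add. apply PP_ext. auto. }
  assert (E4 : IL n (PP m d) 0 = PP n (PP m d) 0 + NN n (PP m d) 0) by apply IL_split.
  assert (Comm : IL n (IL m d) 0 = IL m (IL n d) 0) by (rewrite iterL_swap; reflexivity).
  assert (E5 : IL n (IL m d) 0 = PP n (PP m d) 0 + PP n (NN m d) 0 + (NN n (PP m d) 0 + NN n (NN m d) 0)).
  { rewrite IL_split. rewrite E1. f_equal. rewrite <- NN_add. apply NN_ext. auto. }
  assert (E6 : IL m (IL n d) 0 = PP m (PP n d) 0 + PP m (NN n d) 0 + (NN m (PP n d) 0 + NN m (NN n d) 0)).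
  { rewrite IL_split. rewrite E3. f_equal. rewrite <- NN_add. apply NN_ext. auto. }
  assert (S1 : PP n (PP m d) 0 = PP m (PP n d) 0).
  { unfold d; rewrite !PP_PP. ring. }
  assert (S2 : NN n (NN m d) 0 = 0) by (unfold d; apply NN_NN).
  assert (S3 : NN m (NN n d) 0 = 0) by (unfold d; apply NN_NN).
  rewrite E1, E2, E3, E4. lra.
Qed.
End Sym.

Definition FlowHyp (eps : R) (u v : R -> (nat -> R) -> R) : Prop :=
  forall (j : nat), (1 <= j)%nat -> forall (k : Z) (x : R) (t : nat -> R),
     exists d : R,
       derivable_pt_lim (fun s => coef (Lax u v (upd t j s)) k x) (t j) d /\
       eps * d = coef (dcomm eps (dplus (Bop eps u v j t)) (Lax u v t)) k x.

Lemma get_dk eps u v (flow : FlowHyp eps u v) j (hj : (1 <= j)%nat) t :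
  exists dk : Z -> R -> R,
    (forall k x, derivable_pt_lim (fun s => coef (Lax u v (upd t j s)) k x) (t j) (dk k x)) /\
    (forall k x, eps * dk k x = coef (dcomm eps (dplus (Bop eps u v j t)) (Lax u v t)) k x).
Proof.
  destruct (functional_choice (fun (p : Z * R) d =>
     derivable_pt_lim (fun s => coef (Lax u v (upd t j s)) (fst p) (snd p)) (t j) d /\
     eps * d = coef (dcomm eps (dplus (Bop eps u v j t)) (Lax u v t)) (fst p) (snd p)))
    as [f Hf].
  { intros [k x]. apply flow; auto. }
  exists (fun k x => f (k, x)). split; intros k x; apply (Hf (k, x)).
Qed.

Lemma hdens_iter eps u v X x0 m s :
  good eps X 0 -> X 0%Z = x0 ->
  hdens eps u v m x0 s = / INR (fact m) * iterL X u v s m (delta 0) 0.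
Proof.
  intros Hg HX. unfold hdens. rewrite <- HX. rewrite coef_act. rewrite act_dpow by exact Hg.
  reflexivity.
Qed.

Section CaseA.
Variables (eps : R) (heps : 0 < eps) (u v : R -> (nat -> R) -> R) (flow : FlowHyp eps u v)
  (X : Z -> R) (Hg : forall n, good eps X n) (x0 : R) (HX0 : X 0%Z = x0).

Lemma hd_deriv j t dk m :
  (forall k x, derivable_pt_lim (fun s => coef (Lax u v (upd t j s)) k x) (t j) (dk k x)) ->
  derivable_pt_lim (fun s => hdens eps u v m x0 (upd t j s)) (t j)
    (/ INR (fact m) * DI u v X j t dk (delta 0) m 0).
Proof.
  intros Hdk.
  apply dpl_ext with (g := fun s => / INR (fact m) * iterL X u v (upd t j s) m (delta 0) 0).
  { intro s. apply hdens_iter; auto. }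
  apply dpl_scal. apply DI_deriv; auto.
Qed.

Lemma DI_val j t dk m :
  (forall k x, eps * dk k x = coef (dcomm eps (dplus (Bop eps u v j t)) (Lax u v t)) k x) ->
  eps * DI u v X j t dk (delta 0) m 0 =
  / INR (fact j) * (PP X u v t j (iterL X u v t m (delta 0)) 0 - iterL X u v t m (PP X u v t j (delta 0)) 0).
Proof.
  intros Hdk2. rewrite DI_eps with (eps := eps); auto.
  rewrite Pop_formula by apply Hg.
  replace (Pop eps u v X j t (delta 0)) with (fun k => / INR (fact j) * PP X u v t j (delta 0) k).
  - rewrite iterL_scal. unfold PP. ring.
  - apply functional_extensionality; intro k. rewrite Pop_formula by apply Hg. reflexivity.
Qed.

Lemma caseA : forall (m n : nat), (1 <= m)%nat -> (1 <= n)%nat -> forall (t : nat -> R),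
    exists d : R,
      derivable_pt_lim (fun s => hdens eps u v m x0 (upd t n s)) (t n) d /\
      derivable_pt_lim (fun s => hdens eps u v n x0 (upd t m s)) (t m) d.
Proof.
  intros m n hm hn t.
  destruct (get_dk eps u v flow n hn t) as [dkn [Hn1 Hn2]].
  destruct (get_dk eps u v flow m hm t) as [dkm [Hm1 Hm2]].
  exists (/ INR (fact m) * DI u v X n t dkn (delta 0) m 0). split.
  - apply hd_deriv; auto.
  - replace (/ INR (fact m) * DI u v X n t dkn (delta 0) m 0)
      with (/ INR (fact n) * DI u v X m t dkm (delta 0) n 0).
    + apply hd_deriv; auto.
    + apply Rmult_eq_reg_l with eps; [|lra].
      transitivity (/ INR (fact n) * (eps * DI u v X m t dkm (delta 0) n 0)); [ring|].
      transitivity (/ INR (fact m) * (eps * DI u v X n t dkn (delta 0) m 0)); [|ring].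
      rewrite !DI_val by auto. rewrite (SYM X u v t m n). ring.
Qed.
End CaseA.

Section Tri.
Variables (X : Z -> R) (u v : R -> (nat -> R) -> R) (t : nat -> R).
Local Notation IL := (iterL X u v t).
Local Notation a := (fun m => u (X m) t).
Local Notation b := (fun m => exp (v (X m) t)).

Lemma act_L_delta i :
  act X (Lax u v t) (delta i) = fun m => delta (i - 1) m + u (X i) t * delta i m + exp (v (X (i + 1)%Z) t) * delta (i + 1) m.
Proof.
  apply functional_extensionality; intro m. rewrite act_Lax. unfold delta.
  destruct (Z.eqb_spec (m + 1) i), (Z.eqb_spec m (i - 1)), (Z.eqb_spec m i), (Z.eqb_spec (m - 1) i),
    (Z.eqb_spec m (i + 1)); try lia; try ring.
  - replace m with i by lia. ring.
  - replace m with (i + 1)%Z by lia. ring.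
Qed.

Lemma F1 j i n :
  IL (S j) (delta i) n = IL j (delta (i - 1)) n + u (X i) t * IL j (delta i) n
                         + exp (v (X (i + 1)%Z) t) * IL j (delta (i + 1)) n.
Proof.
  cbn [iterL]. rewrite <- iterL_comm. rewrite act_L_delta.
  rewrite iterL_add. rewrite iterL_add. rewrite !iterL_scal. reflexivity.
Qed.

Lemma F3 j : forall i n, (n + Z.of_nat j <= i)%Z -> IL j (delta i) n = if Z.eqb i (n + Z.of_nat j) then 1 else 0.
Proof.
  induction j; intros i n H.
  - cbn [iterL]. unfold delta. rewrite Z.add_0_r.
    destruct (Z.eqb_spec n i), (Z.eqb_spec i n); try lia; reflexivity.
  - rewrite F1. rewrite !IHj by lia.
    destruct (Z.eqb_spec (i - 1) (n + Z.of_nat j)), (Z.eqb_spec i (n + Z.of_nat j)),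
      (Z.eqb_spec (i + 1) (n + Z.of_nat j)), (Z.eqb_spec i (n + Z.of_nat (S j))); try lia; ring.
Qed.

Fixpoint prodB (bb : Z -> R) (n : Z) (j : nat) : R :=
  match j with O => 1 | S j => bb (n - Z.of_nat j)%Z * prodB bb n j end.
Fixpoint sumA (aa : Z -> R) (n : Z) (j : nat) : R :=
  match j with O => aa n | S j => aa (n - Z.of_nat j - 1)%Z + sumA aa n j end.

Lemma F4 j : forall i n, (i <= n - Z.of_nat j)%Z -> IL j (delta i) n = if Z.eqb i (n - Z.of_nat j) then prodB b n j else 0.
Proof.
  induction j; intros i n H.
  - cbn [iterL prodB]. unfold delta. rewrite Z.sub_0_r.
    destruct (Z.eqb_spec n i), (Z.eqb_spec i n); try lia; reflexivity.
  - rewrite F1. rewrite !IHj by lia. cbn [prodB].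
    destruct (Z.eqb_spec (i - 1) (n - Z.of_nat j)), (Z.eqb_spec i (n - Z.of_nat j)),
      (Z.eqb_spec (i + 1) (n - Z.of_nat j)), (Z.eqb_spec i (n - Z.of_nat (S j))); try lia; try ring.
    replace (i + 1)%Z with (n - Z.of_nat j)%Z by lia. ring.
Qed.

Lemma F5 j : forall n, IL (S j) (delta (n - Z.of_nat j)) n = prodB b n j * sumA a n j.
Proof.
  induction j; intros n.
  - cbn [prodB sumA]. rewrite F1. cbn [iterL]. unfold delta. rewrite Z.sub_0_r.
    destruct (Z.eqb_spec n (n - 1)), (Z.eqb_spec n n), (Z.eqb_spec n (n + 1)); try lia; ring.
  - rewrite F1. cbn [prodB sumA].
    rewrite (F4 (S j) (n - Z.of_nat (S j) - 1)) by lia.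
    rewrite (F4 (S j) (n - Z.of_nat (S j))) by lia.
    replace (n - Z.of_nat (S j) + 1)%Z with (n - Z.of_nat j)%Z by lia.
    rewrite IHj. cbn [prodB].
    destruct (Z.eqb_spec (n - Z.of_nat (S j) - 1) (n - Z.of_nat (S j))),
      (Z.eqb_spec (n - Z.of_nat (S j)) (n - Z.of_nat (S j))); try lia.
    replace (n - Z.of_nat (S j))%Z with (n - Z.of_nat j - 1)%Z by lia. ring.
Qed.
End Tri.

Lemma prodB_eq bb bb' n j : (forall k, (k < j)%nat -> bb (n - Z.of_nat k)%Z = bb' (n - Z.of_nat k)%Z) ->
  prodB bb n j = prodB bb' n j.
Proof. induction j; intros H; simpl; [reflexivity|]. rewrite H, IHj by auto. reflexivity. Qed.

Lemma sumA_eq aa aa' n j : (forall k, (k <= j)%nat -> aa (n - Z.of_nat k)%Z = aa' (n - Z.of_nat k)%Z) ->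
  sumA aa n j = sumA aa' n j.
Proof.
  induction j; intros H; simpl.
  - specialize (H 0%nat (le_n 0)). rewrite Z.sub_0_r in H. exact H.
  - rewrite IHj by auto. f_equal. replace (n - Z.of_nat j - 1)%Z with (n - Z.of_nat (S j))%Z by lia.
    apply H; lia.
Qed.

Lemma prodB_pos bb n j : (forall m, 0 < bb m) -> 0 < prodB bb n j.
Proof. intros H; induction j; simpl; [lra|]. apply Rmult_lt_0_compat; auto. Qed.

Lemma Lax_coef_const u v w k x : (1 <= k)%Z ->
  coef (Lax u v w) k x = if Z.eqb 1 k then 1 else 0.
Proof.
  intros Hk. unfold coef, Lax; cbn [fold_right fst snd].
  destruct (Z.eqb_spec 1 k), (Z.eqb_spec 0 k), (Z.eqb_spec (-1) k); try lia; ring.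
Qed.

Lemma constraint eps u v (flow : FlowHyp eps u v) j (hj : (1 <= j)%nat) k (hk : (1 <= k)%Z) x t :
  coef (dcomm eps (dplus (Bop eps u v j t)) (Lax u v t)) k x = 0.
Proof.
  destruct (flow j hj k x t) as [d [Hd Hc]].
  assert (d = 0).
  { apply (uniqueness_limite (fun _ => if Z.eqb 1 k then 1 else 0) (t j)); [|apply dpl_const].
    eapply dpl_ext; [|exact Hd]. intro s. cbv beta. rewrite Lax_coef_const by exact hk. reflexivity. }
  subst. rewrite <- Hc. ring.
Qed.

Definition X0 : Z -> R := fun _ => 0.

Lemma good_X0 eps n : good eps X0 n.
Proof. intro k. unfold X0, Defs.shift. unfold Rdiv. ring. Qed.

Lemma Pform eps u v X j t h m : good eps X m ->
  act X (dplus (Bop eps u v j t)) h m = / INR (fact j) * iterL X u v t j (trunc m h) m.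
Proof. intros H. unfold Bop. rewrite act_plus, act_scale, act_dpow by exact H. reflexivity. Qed.

Lemma trunc_delta m i : (m <= i)%Z -> trunc m (delta i) = delta i.
Proof.
  intros H. apply functional_extensionality; intro q. unfold trunc, delta.
  destruct (Z.leb_spec m q), (Z.eqb_spec q i); try lia; reflexivity.
Qed.

Lemma trunc_Ldelta X u v t n i : (n + 1 <= i)%Z ->
  trunc n (act X (Lax u v t) (delta i)) = act X (Lax u v t) (delta i).
Proof.
  intros H. apply functional_extensionality; intro q. unfold trunc.
  destruct (Z.leb_spec n q); [reflexivity|]. rewrite act_Lax. unfold delta.
  destruct (Z.eqb_spec (q + 1) i), (Z.eqb_spec q i), (Z.eqb_spec (q - 1) i); try lia; ring.
Qed.

Section RowK.
Variables (eps : R) (u v : R -> (nat -> R) -> R) (flow : FlowHyp eps u v)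
  (X : Z -> R) (p : Z) (Hg : forall n, n <> p -> good eps X n) (HXp : X p = 0).

Lemma rowK t j (hj : (1 <= j)%nat) i (hi : (p <= i)%Z) :
  iterL X u v t j (delta i) p = iterL X0 u v t j (delta i) p.
Proof.
  set (n := (p - 1)%Z).
  assert (Hgn : good eps X n) by (apply Hg; unfold n; lia).
  assert (Hgn1 : good eps X (n - 1)) by (apply Hg; unfold n; lia).
  pose proof (constraint eps u v flow j hj (i - n) ltac:(unfold n; lia) (X n) t) as H0.
  rewrite coef_act in H0. replace (n + (i - n))%Z with i in H0 by lia.
  unfold dcomm, dadd in H0. rewrite act_app, act_scale, !act_mul in H0 by exact Hgn.
  rewrite Pform in H0 by exact Hgn.
  rewrite act_Lax in H0.
  rewrite (Pform _ _ _ _ _ _ _ n Hgn) in H0.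
  rewrite (Pform _ _ _ _ _ _ _ (n - 1) Hgn1) in H0.
  replace (n + 1)%Z with p in H0 by (unfold n; lia).
  rewrite (act_pt X X0) in H0 by (rewrite HXp; reflexivity).
  rewrite (Pform _ _ _ X0 _ _ _ p (good_X0 eps p)) in H0.
  rewrite trunc_Ldelta in H0 by (unfold n; lia).
  rewrite !trunc_delta in H0 by (unfold n; lia).
  rewrite iterL_comm in H0. rewrite act_Lax in H0.
  replace (n + 1)%Z with p in H0 by (unfold n; lia).
  assert (Hc : / INR (fact j) <> 0) by (apply Rinv_neq_0_compat, INR_fact_neq_0).
  apply Rmult_eq_reg_l with (/ INR (fact j)); [|exact Hc]. lra.
Qed.
End RowK.

Section Force.
Variables (u v : R -> (nat -> R) -> R) (X : Z -> R) (p : Z) (t : nat -> R) (HXp : X p = 0).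
Hypothesis K : forall j i, (p <= i)%Z -> iterL X u v t j (delta i) p = iterL X0 u v t j (delta i) p.
Local Notation IX := (iterL X u v t).
Local Notation I0 := (iterL X0 u v t).
Local Notation A0 := (u 0 t).
Local Notation B0 := (exp (v 0 t)).

Lemma F1_0 j i n : I0 (S j) (delta i) n = I0 j (delta (i - 1)) n + A0 * I0 j (delta i) n + B0 * I0 j (delta (i + 1)) n.
Proof. rewrite F1. reflexivity. Qed.

Lemma c_top j i : (p + Z.of_nat j = i)%Z -> I0 j (delta i) p = 1.
Proof. intros H. rewrite F3 by lia. destruct (Z.eqb_spec i (p + Z.of_nat j)); lia || reflexivity. Qed.
Lemma c_above j i : (p + Z.of_nat j < i)%Z -> I0 j (delta i) p = 0.
Proof. intros H. rewrite F3 by lia. destruct (Z.eqb_spec i (p + Z.of_nat j)); lia || reflexivity. Qed.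

Lemma up_a i : (p < i)%Z -> u (X i) t = A0.
Proof.
  intros H. set (j := Z.to_nat (i - p)).
  pose proof (F1 X u v t j i p) as E1. pose proof (F1_0 j i p) as E2.
  rewrite K in E1 by lia. rewrite E2 in E1.
  rewrite (K j (i - 1)) in E1 by lia. rewrite (K j i) in E1 by lia. rewrite (K j (i + 1)) in E1 by lia.
  rewrite (c_top j i) in E1 by (unfold j; lia). rewrite (c_above j (i + 1)) in E1 by (unfold j; lia). lra.
Qed.

Lemma up_b i : (p < i)%Z -> exp (v (X (i + 1)%Z) t) = B0.
Proof.
  intros H. set (j := Z.to_nat (i + 1 - p)).
  pose proof (F1 X u v t j i p) as E1. pose proof (F1_0 j i p) as E2.
  rewrite K in E1 by lia. rewrite E2 in E1.
  rewrite (K j (i - 1)) in E1 by lia. rewrite (K j i) in E1 by lia. rewrite (K j (i + 1)) in E1 by lia.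
  rewrite (c_top j (i + 1)) in E1 by (unfold j; lia). rewrite up_a in E1 by lia. lra.
Qed.

Lemma site_p : u (X p) t = A0 /\ exp (v (X p) t) = B0.
Proof. rewrite HXp. auto. Qed.

Lemma up_b1 : exp (v (X (p + 1)%Z) t) = B0.
Proof.
  pose proof (F1 X u v t 1 p p) as E1. pose proof (F1_0 1 p p) as E2.
  rewrite K in E1 by lia. rewrite E2 in E1.
  pose proof (F4 X u v t 1 (p - 1) p ltac:(lia)) as G1.
  pose proof (F4 X0 u v t 1 (p - 1) p ltac:(lia)) as G2.
  pose proof (F5 X u v t 0 p) as G3. pose proof (F5 X0 u v t 0 p) as G4.
  pose proof (c_top 1 (p + 1) ltac:(lia)) as G5.
  pose proof (F3 X u v t 1 (p + 1) p ltac:(lia)) as G6.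
  replace (p - Z.of_nat 0)%Z with p in G3, G4 by lia.
  destruct (Z.eqb_spec (p - 1) (p - Z.of_nat 1)); [|lia].
  rewrite G1, G2, G3, G4, G5, G6 in E1. rewrite Z.eqb_refl in E1.
  cbn [prodB sumA] in E1. unfold X0 in E1. replace (p - Z.of_nat 0)%Z with p in E1 by lia.
  destruct site_p as [Ha Hb]. rewrite Ha, Hb in E1. lra.
Qed.

Lemma up_all m : (p <= m)%Z -> u (X m) t = A0 /\ exp (v (X m) t) = B0.
Proof.
  intros H. destruct (Z.eq_dec m p) as [->|Hne]; [apply site_p|].
  split; [apply up_a; lia|].
  destruct (Z.eq_dec m (p + 1)) as [->|Hne2]; [apply up_b1|].
  replace m with ((m - 1) + 1)%Z by lia. apply up_b. lia.
Qed.

Lemma prodB_const d (Hs : forall m, (p - Z.of_nat d <= m)%Z -> exp (v (X m) t) = B0) j :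
  (j <= S d)%nat -> prodB (fun m => exp (v (X m) t)) p j = prodB (fun m => exp (v (X0 m) t)) p j.
Proof. intros Hj. apply prodB_eq. intros k Hk. unfold X0. apply Hs. lia. Qed.

Lemma down d :
  (forall j i, (p - Z.of_nat d <= i)%Z -> IX j (delta i) p = I0 j (delta i) p) /\
  (forall m, (p - Z.of_nat d <= m)%Z -> u (X m) t = A0 /\ exp (v (X m) t) = B0).
Proof.
  induction d as [|d [IHc IHs]].
  - split; [intros; apply K; lia | intros; apply up_all; lia].
  - set (q := (p - Z.of_nat d)%Z).
    assert (C1 : forall j, IX j (delta (q - 1)) p = I0 j (delta (q - 1)) p).
    { intro j. pose proof (F1 X u v t j q p) as E1. pose proof (F1_0 j q p) as E2.
      rewrite IHc in E1 by (unfold q; lia). rewrite E2 in E1.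
      rewrite (IHc j q) in E1 by (unfold q; lia). rewrite (IHc j (q + 1)%Z) in E1 by (unfold q; lia).
      destruct (IHs q ltac:(unfold q; lia)) as [Ha _]. destruct (IHs (q + 1)%Z ltac:(unfold q; lia)) as [_ Hb].
      rewrite Ha, Hb in E1. lra. }
    assert (Aq : u (X (q - 1)%Z) t = A0).
    { pose proof (F5 X u v t (S d) p) as G1. pose proof (F5 X0 u v t (S d) p) as G2.
      replace (p - Z.of_nat (S d))%Z with (q - 1)%Z in G1, G2 by (unfold q; lia).
      rewrite C1 in G1. rewrite G1 in G2. clear G1.
      rewrite (prodB_const d) in G2 by (auto; intros m Hm; apply IHs; lia).
      cbn [sumA] in G2.
      rewrite (sumA_eq (fun m => u (X m) t) (fun m => u (X0 m) t) p d) in G2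
        by (intros k Hk; unfold X0; apply IHs; lia).
      replace (p - Z.of_nat d - 1)%Z with (q - 1)%Z in G2 by (unfold q; lia).
      assert (Hpos : 0 < prodB (fun m => exp (v (X0 m) t)) p (S d)) by (apply prodB_pos; intro; apply exp_pos).
      apply Rmult_eq_reg_l in G2; [|lra]. unfold X0 in G2. lra. }
    assert (C2 : forall j, IX j (delta (q - 2)) p = I0 j (delta (q - 2)) p).
    { intro j. pose proof (F1 X u v t j (q - 1) p) as E1. pose proof (F1_0 j (q - 1) p) as E2.
      rewrite C1 in E1. rewrite E2 in E1.
      replace (q - 1 - 1)%Z with (q - 2)%Z in E1, E2 by lia.
      replace (q - 1 + 1)%Z with q in E1, E2 by lia.
      rewrite C1 in E1. rewrite (IHc j q) in E1 by (unfold q; lia).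
      destruct (IHs q ltac:(unfold q; lia)) as [_ Hb].
      rewrite Aq, Hb in E1. lra. }
    assert (Bq : exp (v (X (q - 1)%Z) t) = B0).
    { pose proof (F4 X u v t (S (S d)) (q - 2) p ltac:(unfold q; lia)) as G1.
      pose proof (F4 X0 u v t (S (S d)) (q - 2) p ltac:(unfold q; lia)) as G2.
      destruct (Z.eqb_spec (q - 2) (p - Z.of_nat (S (S d)))); [|unfold q in *; lia].
      rewrite C2, G2 in G1. clear G2.
      change (prodB (fun m => exp (v (X0 m) t)) p (S (S d))) with
        (exp (v (X0 (p - Z.of_nat (S d))%Z) t) * prodB (fun m => exp (v (X0 m) t)) p (S d)) in G1.
      change (prodB (fun m => exp (v (X m) t)) p (S (S d))) with
        (exp (v (X (p - Z.of_nat (S d))%Z) t) * prodB (fun m => exp (v (X m) t)) p (S d)) in G1.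
      replace (p - Z.of_nat (S d))%Z with (q - 1)%Z in G1 by (unfold q; lia).
      rewrite (prodB_const d) in G1 by (auto; intros m Hm; apply IHs; lia).
      assert (Hpos : 0 < prodB (fun m => exp (v (X0 m) t)) p (S d)) by (apply prodB_pos; intro; apply exp_pos).
      apply Rmult_eq_reg_r in G1; [|lra]. unfold X0 in G1. lra. }
    split.
    + intros j i Hi. destruct (Z.eq_dec i (q - 1)) as [->|Hne]; [apply C1|].
      apply IHc. unfold q in *. lia.
    + intros m Hm. destruct (Z.eq_dec m (q - 1)) as [->|Hne]; [split; assumption|].
      apply IHs. unfold q in *. lia.
Qed.

Lemma force_all m : u (X m) t = A0 /\ exp (v (X m) t) = B0.
Proof. destruct (down (Z.to_nat (p - m))) as [_ H]. apply H. lia. Qed.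
End Force.

Lemma good_orbit eps w n : eps <> 0 -> w - IZR n <> 0 ->
  good eps (fun n => / (eps * (w - IZR n))) n.
Proof.
  intros He Ha k. unfold Defs.shift. rewrite plus_IZR.
  destruct (Req_dec (w - IZR n - IZR k) 0) as [Hz|Hz].
  - replace (w - (IZR n + IZR k)) with 0 by lra. rewrite Rmult_0_r, Rinv_0.
    replace (1 - IZR k * eps * / (eps * (w - IZR n))) with 0.
    + unfold Rdiv. rewrite Rinv_0. ring.
    + replace (IZR k) with (w - IZR n) by lra. field. split; auto.
  - replace (w - (IZR n + IZR k)) with (w - IZR n - IZR k) by ring.
    field. repeat split; auto.
Qed.

Lemma iterL_eq_X0 u v X s (H : forall m, u (X m) s = u 0 s /\ exp (v (X m) s) = exp (v 0 s)) i g :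
  iterL X u v s i g = iterL X0 u v s i g.
Proof.
  induction i; [reflexivity|]. cbn [iterL]. rewrite IHi.
  apply functional_extensionality; intro n. rewrite !act_Lax. destruct (H n) as [H1 H2].
  rewrite H1, H2. reflexivity.
Qed.

Theorem mainTheorem10 (eps : R) (heps : 0 < eps) (u v : R -> (nat -> R) -> R)
  (flow : forall (j : nat), (1 <= j)%nat -> forall (k : Z) (x : R) (t : nat -> R),
     exists d : R,
       derivable_pt_lim (fun s => coef (Lax u v (upd t j s)) k x) (t j) d /\
       eps * d = coef (dcomm eps (dplus (Bop eps u v j t)) (Lax u v t)) k x) :
  forall (m n : nat), (1 <= m)%nat -> (1 <= n)%nat -> forall (x : R) (t : nat -> R),
    exists d : R,
      derivable_pt_lim (fun s => hdens eps u v m x (upd t n s)) (t n) d /\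
      derivable_pt_lim (fun s => hdens eps u v n x (upd t m s)) (t m) d.
Proof.
  intros m n hm hn x t.
  assert (fl : FlowHyp eps u v) by exact flow.
  assert (He : eps <> 0) by lra.
  assert (A0 : forall t, exists d : R,
      derivable_pt_lim (fun s => hdens eps u v m 0 (upd t n s)) (t n) d /\
      derivable_pt_lim (fun s => hdens eps u v n 0 (upd t m s)) (t m) d).
  { intro t'. apply (caseA eps heps u v fl X0 (good_X0 eps) 0 eq_refl m n hm hn t'). }
  destruct (Req_dec x 0) as [Hx|Hx]; [subst; apply A0|].
  set (w0 := / (eps * x)).
  assert (Hw0 : w0 <> 0) by (unfold w0; apply Rinv_neq_0_compat; apply Rmult_integral_contrapositive; auto).
  destruct (classic (exists p : Z, w0 = IZR p)) as [[p Hp]|Hnp].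
  - set (X := fun n => / (eps * (IZR p - IZR n))).
    assert (HXp : X p = 0) by (unfold X; replace (IZR p - IZR p) with 0 by ring; rewrite Rmult_0_r; apply Rinv_0).
    assert (Hg : forall k, k <> p -> good eps X k).
    { intros k Hk. apply good_orbit; auto. intro Hc. apply Hk. apply eq_IZR. lra. }
    assert (Hp0 : p <> 0%Z) by (intro; subst; simpl in Hp; auto).
    assert (HX0 : X 0%Z = x).
    { unfold X. rewrite <- Hp. unfold w0. simpl. field. auto. }
    assert (F : forall s m', u (X m') s = u 0 s /\ exp (v (X m') s) = exp (v 0 s)).
    { intros s m'. apply (force_all u v X p s HXp).
      intros j i Hi. destruct j as [|j]; [reflexivity|].
      apply (rowK eps u v fl X p Hg HXp s (S j)); auto; lia. }
    assert (Hh : forall k s, hdens eps u v k x s = hdens eps u v k 0 s).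
    { intros k s. rewrite (hdens_iter eps u v X x k s (Hg 0%Z ltac:(auto)) HX0).
      rewrite (hdens_iter eps u v X0 0 k s (good_X0 eps 0) eq_refl).
      rewrite iterL_eq_X0 by apply F. reflexivity. }
    destruct (A0 t) as [d [D1 D2]]. exists d. split.
    + eapply dpl_ext; [|exact D1]. intro s. apply Hh.
    + eapply dpl_ext; [|exact D2]. intro s. apply Hh.
  - set (X := fun n => / (eps * (w0 - IZR n))).
    assert (Hg : forall k, good eps X k).
    { intros k. apply good_orbit; auto. intro Hc. apply Hnp. exists k. lra. }
    assert (HX0 : X 0%Z = x).
    { unfold X, w0. simpl. field. auto. }
    apply (caseA eps heps u v fl X Hg x HX0 m n hm hn t).
Qed.
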